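(* Let $\mathcal{K}_1=(\mathcal{R}_1,\mathcal{T}_1)$ and $\mathcal{K}_2=(\mathcal{R}_2,\mathcal{T}_2)$ be $\mathcal{ALCP}$ knowledge bases with $\mathrm{sig}(\mathcal{K}_1)\cap\mathrm{sig}(\mathcal{K}_2)=\emptyset$, such that $\mathcal{K}_1$ and $\mathcal{K}_1\cup\mathcal{K}_2=(\mathcal{R}_1\cup\mathcal{R}_2,\mathcal{T}_1\cup\mathcal{T}_2)$ are ME-consistent, where $\mathcal{K}_1\cup\mathcal{K}_2$ is taken over the propositional language whose signature is the union of those of $\mathcal{K}_1$ and $\mathcal{K}_2$. Let $C,D$ be concepts and $\kappa$ a context with $(\mathrm{sig}(C)\cup\mathrm{sig}(D)\cup\mathrm{sig}(\kappa))\cap\mathrm{sig}(\mathcal{K}_2)=\emptyset$. Then $\mathcal{B}_{\mathcal{K}_1}(C\sqsubseteq D\mid\kappa)=\mathcal{B}_{\mathcal{K}_1\cup\mathcal{K}_2}(C\sqsubseteq D\mid\kappa)$.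
   Context: For a propositional language $\mathcal{L}$ over a finite set of variables, $\mathrm{Int}(\mathcal{L})$ is the set of truth assignments. A probability distribution over $\mathcal{L}$ is $P:\mathrm{Int}(\mathcal{L})\to[0,1]$ summing to $1$, with $P(\phi)=\sum_{v\models\phi}P(v)$. A probabilistic constraint is $c_0+\sum_{i=1}^k c_i\,\mathsf{p}(\phi_i)\ge 0$ ($c_i\in\mathbb{R}$, $\phi_i\in\mathcal{L}$), satisfied by $P$ iff $c_0+\sum_ic_iP(\phi_i)\ge0$; $\mathrm{Mod}(\mathcal{R})$ is the set of distributions satisfying all constraints in $\mathcal{R}$; for consistent $\mathcal{R}$, $P^{ME}_{\mathcal{R}}$ is the unique maximizer in $\mathrm{Mod}(\mathcal{R})$ of $H(P)=-\sum_vP(v)\log P(v)$. Concepts: $C::=A\mid\neg C\mid C\sqcap C\mid\exists r.C$. An $\mathcal{L}$-GCI is $\langle C\sqsubseteq D:\kappa\rangle$, $\kappa\in\mathcal{L}$; an $\mathcal{L}$-TBox is a finite set of them; a KB is $\mathcal{K}=(\mathcal{R},\mathcal{T})$. $\mathrm{sig}(\mathcal{T})$ is the set of concept and role names occurring in $\mathcal{T}$, $\mathrm{sig}(\mathcal{R})$ the set of propositional variables occurring in $\mathcal{R}$, and $\mathrm{sig}(\mathcal{K})=\mathrm{sig}(\mathcal{R})\cup\mathrm{sig}(\mathcal{T})$; $\mathrm{sig}(C)$ and $\mathrm{sig}(\kappa)$ are the symbols occurring in $C$ and $\kappa$. A possible world $\mathcal{I}=(\Delta^{\mathcal{I}},\cdot^{\mathcal{I}},v^{\mathcal{I}})$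 is a classical $\mathcal{ALC}$ interpretation together with $v^{\mathcal{I}}\in\mathrm{Int}(\mathcal{L})$; it models $\langle C\sqsubseteq D:\kappa\rangle$ iff $v^{\mathcal{I}}\not\models\kappa$ or $C^{\mathcal{I}}\subseteq D^{\mathcal{I}}$. An $\mathcal{ALCP}$-interpretation $\mathcal{P}=(\mathfrak{I},P_{\mathfrak{I}})$ is a nonempty finite set of possible worlds with a probability distribution on it; $P^{\mathcal{P}}(v)=\sum_{\mathcal{I}\in\mathfrak{I},v^{\mathcal{I}}=v}P_{\mathfrak{I}}(\mathcal{I})$. $\mathcal{P}$ is an ME-$\mathcal{ALCP}$-model of $\mathcal{K}$ iff all its worlds model every GCI of $\mathcal{T}$ and $P^{\mathcal{P}}=P^{ME}_{\mathcal{R}}$; $\mathrm{Mod}_{ME}(\mathcal{K})$ is the set of these; $\mathcal{K}$ is ME-consistent iff it is nonempty. $\Pr_{\mathcal{P}}(C\sqsubseteq D\mid\kappa)=\big(\sum_{\mathcal{I}\in\mathfrak{I},v^{\mathcal{I}}\models\kappa,C^{\mathcal{I}}\subseteq D^{\mathcal{I}}}P_{\mathfrak{I}}(\mathcal{I})\big)/\big(\sum_{\mathcal{I}\in\mathfrak{I},v^{\mathcal{I}}\models\kappa}P_{\mathfrak{I}}(\mathcal{I})\big)$. The belief interval $\mathcal{B}_{\mathcal{K}}(C\sqsubseteq D\mid\kappa)$ is $[\inf,\sup]$ of $\Pr_{\mathcal{P}}(C\sqsubseteq D\mid\kappa)$ over $\mathcal{P}\in\mathrm{Mod}_{ME}(\mathcal{K})$.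 *)

(* Defs.v *)
From Stdlib Require List.
From HB Require Import structures.
From mathcomp Require Import all_boot all_order all_algebra.
From mathcomp Require Import finmap.
From mathcomp Require Import boolp classical_sets reals exp.
Set Implicit Arguments.
Unset Strict Implicit.
Unset Printing Implicit Defensive.
Import Order.TTheory GRing.Theory Num.Theory.
Local Open Scope ring_scope.


Inductive pform : Type :=
  | PTrue
  | PVar of nat
  | PNot of pform
  | PAnd of pform & pform
  | POr of pform & pform.

Fixpoint pvars (f : pform) : seq nat :=
  match f with
  | PTrue => [::]
  | PVar x => [:: x]
  | PNot g => pvars g
  | PAnd g h => pvars g ++ pvars h
  | POr g h => pvars g ++ pvars h
  end.

Definition assignment (S : {fset nat}) := {ffun S -> bool}.

Definition eval_var (S : {fset nat}) (v : assignment S) (x : nat) : bool :=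
  match (insub x : option S) with Some s => v s | None => false end.

Fixpoint sat (S : {fset nat}) (v : assignment S) (f : pform) : bool :=
  match f with
  | PTrue => true
  | PVar x => eval_var v x
  | PNot g => ~~ sat v g
  | PAnd g h => sat v g && sat v h
  | POr g h => sat v g || sat v h
  end.

Definition in_lang (S : {fset nat}) (f : pform) : bool :=
  all (fun x => x \in S) (pvars f).

Definition is_distr (R : realType) (S : {fset nat}) (P : assignment S -> R) :=
  (forall v, 0 <= P v) /\ \sum_(v : assignment S) P v = 1.

Definition prob (R : realType) (S : {fset nat}) (P : assignment S -> R)
  (f : pform) : R := \sum_(v : assignment S | sat v f) P v.

(* probabilistic constraint  c0 + sum_i c_i p(phi_i) >= 0 *)
Record pconstraint (R : realType) := PConstr {
  pc_c0 : R;
  pc_terms : seq (R * pform) }.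

Definition pc_vars (R : realType) (c : pconstraint R) : seq nat :=
  flatten [seq pvars t.2 | t <- pc_terms c].

Definition pc_sat (R : realType) (S : {fset nat}) (P : assignment S -> R)
  (c : pconstraint R) : Prop :=
  0 <= pc_c0 c + \sum_(t <- pc_terms c) t.1 * prob P t.2.

Definition ModR (R : realType) (S : {fset nat}) (Rs : seq (pconstraint R))
  (P : assignment S -> R) : Prop :=
  is_distr P /\ forall c, List.In c Rs -> pc_sat P c.

(* entropy, with 0 log 0 = 0 (ln 0 = 0 in mathcomp-analysis) *)
Definition entropy (R : realType) (S : {fset nat}) (P : assignment S -> R) : R :=
  - \sum_(v : assignment S) P v * ln (P v).

(* P is the maximum-entropy model P^ME_R of Rs (the maximizer is unique
   whenever Rs is consistent, so this characterizes P^ME_R). *)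
Definition is_ME (R : realType) (S : {fset nat}) (Rs : seq (pconstraint R))
  (P : assignment S -> R) : Prop :=
  ModR Rs P /\ forall Q : assignment S -> R, ModR Rs Q -> entropy Q <= entropy P.

Inductive concept : Type :=
  | CName of nat
  | CNot of concept
  | CAnd of concept & concept
  | CEx of nat & concept.

Fixpoint cnames (C : concept) : seq nat :=
  match C with
  | CName A => [:: A]
  | CNot C' => cnames C'
  | CAnd C1 C2 => cnames C1 ++ cnames C2
  | CEx _ C' => cnames C'
  end.

Fixpoint rnames (C : concept) : seq nat :=
  match C with
  | CName _ => [::]
  | CNot C' => rnames C'
  | CAnd C1 C2 => rnames C1 ++ rnames C2
  | CEx r C' => r :: rnames C'
  end.

Record gci := GCI { g_lhs : concept; g_rhs : concept; g_ctx : pform }.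

Record kb (R : realType) := KB {
  kb_lang : {fset nat};
  kb_R : seq (pconstraint R);
  kb_T : seq gci }.

Definition kb_wf (R : realType) (K : kb R) : Prop :=
  (forall c, List.In c (kb_R K) -> all (fun x => x \in kb_lang K) (pc_vars c)) /\
  (forall g, List.In g (kb_T K) -> in_lang (kb_lang K) (g_ctx g)).

Definition sigR_vars (R : realType) (Rs : seq (pconstraint R)) : seq nat :=
  flatten [seq pc_vars c | c <- Rs].
Definition sigT_vars (T : seq gci) : seq nat :=
  flatten [seq pvars (g_ctx g) | g <- T].
Definition sigT_cnames (T : seq gci) : seq nat :=
  flatten [seq cnames (g_lhs g) ++ cnames (g_rhs g) | g <- T].
Definition sigT_rnames (T : seq gci) : seq nat :=
  flatten [seq rnames (g_lhs g) ++ rnames (g_rhs g) | g <- T].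

Definition sig_vars (R : realType) (K : kb R) : seq nat :=
  sigR_vars (kb_R K) ++ sigT_vars (kb_T K).
Definition sig_cnames (R : realType) (K : kb R) : seq nat := sigT_cnames (kb_T K).
Definition sig_rnames (R : realType) (K : kb R) : seq nat := sigT_rnames (kb_T K).

Definition sig_disjoint (R : realType) (K1 K2 : kb R) : Prop :=
  [/\ forall x, x \in sig_vars K1 -> x \notin sig_vars K2,
      forall A, A \in sig_cnames K1 -> A \notin sig_cnames K2 &
      forall r, r \in sig_rnames K1 -> r \notin sig_rnames K2].

Definition kb_union (R : realType) (K1 K2 : kb R) : kb R :=
  KB (kb_lang K1 `|` kb_lang K2)%fset (kb_R K1 ++ kb_R K2) (kb_T K1 ++ kb_T K2).

Record world (S : {fset nat}) := World {
  w_dom : Type;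
  w_elt : w_dom;                         (* nonempty domain *)
  w_cext : nat -> w_dom -> Prop;
  w_rext : nat -> w_dom -> w_dom -> Prop;
  w_val : assignment S }.

Fixpoint cext (S : {fset nat}) (I : world S) (C : concept) : w_dom I -> Prop :=
  match C with
  | CName A => @w_cext S I A
  | CNot C' => fun x => ~ @cext S I C' x
  | CAnd C1 C2 => fun x => @cext S I C1 x /\ @cext S I C2 x
  | CEx r C' => fun x => exists y, @w_rext S I r x y /\ @cext S I C' y
  end.

Definition subsumed (S : {fset nat}) (I : world S) (C D : concept) : Prop :=
  forall x, @cext S I C x -> @cext S I D x.

Definition models_gci (S : {fset nat}) (I : world S) (g : gci) : Prop :=
  ~~ sat (w_val I) (g_ctx g) \/ subsumed I (g_lhs g) (g_rhs g).

(* A finite family of possible worlds with a probability distribution on it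
   (a family rather than a set: repeated worlds just add up their weights). *)
Record alcp_interp (R : realType) (S : {fset nat}) := ALCPInterp {
  ai_idx : finType;
  ai_world : ai_idx -> world S;
  ai_prob : ai_idx -> R;
  ai_prob_ge0 : forall i, 0 <= ai_prob i;
  ai_prob_sum1 : \sum_(i : ai_idx) ai_prob i = 1 }.

Definition marginal (R : realType) (S : {fset nat}) (P : alcp_interp R S)
  (v : assignment S) : R :=
  \sum_(i : ai_idx P | w_val (@ai_world _ _ P i) == v) @ai_prob _ _ P i.

Definition is_ME_model (R : realType) (K : kb R)
  (P : alcp_interp R (kb_lang K)) : Prop :=
  (forall i g, List.In g (kb_T K) -> models_gci (@ai_world _ _ P i) g) /\
  is_ME (kb_R K) (marginal P).

Definition ME_consistent (R : realType) (K : kb R) : Prop :=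
  exists P : alcp_interp R (kb_lang K), is_ME_model P.

(* Pr_P(C [= D | kappa); division by 0 yields 0 *)
Definition cond_prob (R : realType) (S : {fset nat}) (P : alcp_interp R S)
  (C D : concept) (kappa : pform) : R :=
  (\sum_(i : ai_idx P | sat (w_val (@ai_world _ _ P i)) kappa &&
          `[< subsumed (@ai_world _ _ P i) C D >]) @ai_prob _ _ P i) /
  (\sum_(i : ai_idx P | sat (w_val (@ai_world _ _ P i)) kappa) @ai_prob _ _ P i).

Definition belief_values (R : realType) (K : kb R) (C D : concept)
  (kappa : pform) : set R :=
  [set x | exists P : alcp_interp R (kb_lang K), is_ME_model P /\
                                               cond_prob P C D kappa = x].

Definition belief_interval (R : realType) (K : kb R) (C D : concept)
  (kappa : pform) : R * R :=
  (inf (belief_values K C D kappa), sup (belief_values K C D kappa)).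

(* Main.v *)
Require Import Defs.
From HB Require Import structures.
From mathcomp Require Import all_boot all_order all_algebra.
From mathcomp Require Import finmap.
From mathcomp Require Import boolp classical_sets reals exp.
From mathcomp Require Import ring lra.
Set Implicit Arguments.
Unset Strict Implicit.
Unset Printing Implicit Defensive.
Import Order.TTheory GRing.Theory Num.Theory.
Local Open Scope ring_scope.

Section Ent.
Variable R : realType.

Definition Hf (T : finType) (P : T -> R) : R := - \sum_(x : T) P x * ln (P x).

Definition distr (T : finType) (P : T -> R) :=
  (forall x, 0 <= P x) /\ \sum_(x : T) P x = 1.

Lemma ln_le_sub1 (y : R) : 0 < y -> ln y <= y - 1.
Proof.
move=> y0; have := expR_ge1Dx (ln y); rewrite lnK ?posrE // => h.
by rewrite lerBrDl.
Qed.

Lemma ln_lt_sub1 (y : R) : 0 < y -> y != 1 -> ln y < y - 1.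
Proof.
move=> y0 y1; have : ln y != 0 by rewrite ln_eq0.
move/expR_gt1Dx; rewrite lnK ?posrE // => h.
by rewrite ltrBrDl.
Qed.

Lemma xlnx_mid (a b : R) : 0 <= a -> 0 <= b ->
  let m := (a + b) / 2 in
  0 <= a * ln a + b * ln b - 2 * (m * ln m) /\
  (a * ln a + b * ln b - 2 * (m * ln m) = 0 -> a = b).
Proof.
move=> a0 b0 m.
have [ab0|abpos] := eqVneq (a + b) 0.
  move/eqP: ab0; rewrite (paddr_eq0 a0 b0) => /andP[/eqP a00 /eqP b00].
  by rewrite /m a00 b00 !mul0r addr0 !mul0r !mulr0 ?subr0 ?sub0r ?oppr0; split.
have mpos : 0 < m.
  by rewrite /m divr_gt0 // lt_def abpos addr_ge0.
have h2 : 2 * m = a + b by rewrite /m mulrC divfK // pnatr_eq0.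
clearbody m.
have key : forall t : R, 0 <= t -> t * ln t - t * ln m >= t - m /\
    (t != m -> t * ln t - t * ln m > t - m).
  move=> t t0; have [->|tpos] := eqVneq t 0.
    by rewrite !mul0r subrr sub0r oppr_lt0 mpos oppr_le0 ltW.
  have tp : 0 < t by rewrite lt_def tpos t0.
  have e : t * ln t - t * ln m = - (t * ln (m / t)).
    by rewrite (ln_div (x:=m)) ?posrE //; ring.
  have e2 : t - m = - (t * (m / t - 1)).
    by field; rewrite lt0r_neq0.
  rewrite e e2 lerN2 ltrN2; split.
    by rewrite ler_pM2l // ln_le_sub1 // divr_gt0.
  move=> tm; rewrite ltr_pM2l // ln_lt_sub1 // ?divr_gt0 //.
  apply/negP => /eqP h.
  have mt : m = t by rewrite -[m](divfK (lt0r_neq0 tp)) h mul1r.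
  by rewrite mt eqxx in tm.
have E : a * ln a + b * ln b - 2 * (m * ln m) =
   (a * ln a - a * ln m) + (b * ln b - b * ln m).
  rewrite mulrA h2; ring.
have zm : (a - m) + (b - m) = 0.
  rewrite addrACA -opprD -mulr2n -mulr_natl h2 subrr //.
have [ka ka'] := key a a0; have [kb kb'] := key b b0.
rewrite E; split.
  by rewrite -zm lerD.
move=> h0; apply/eqP/negPn/negP => ab.
have : (a != m) || (b != m).
  case: eqVneq => [am|//]; case: eqVneq => [bm|//].
  by move: ab; rewrite am bm eqxx.
case/orP => [/ka' ha|/kb' hb].
  by have := ltr_leD ha kb; rewrite zm h0 ltxx.
by have := ler_ltD ka hb; rewrite zm h0 ltxx.
Qed.


Definition marg (T T' : finType) (f : T -> T') (P : T -> R) (u : T') : R :=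
  \sum_(w | f w == u) P w.

Section Split.
Variables (W U V : finType) (fa : W -> U) (fb : W -> V) (join : U -> V -> W).
Hypotheses (faK : forall u v, fa (join u v) = u) (fbK : forall u v, fb (join u v) = v)
  (joinK : forall w, join (fa w) (fb w) = w).

Definition prodD (PA : U -> R) (PB : V -> R) (w : W) : R := PA (fa w) * PB (fb w).

Lemma sum_split (F : W -> R) :
  \sum_w F w = \sum_u \sum_v F (join u v).
Proof.
rewrite pair_big /= (reindex (fun p : U * V => join p.1 p.2)) //=.
exists (fun w => (fa w, fb w)) => [[u v] _|w _] /=; first by rewrite faK fbK.
by rewrite joinK.
Qed.

Lemma sum_splitP (Q : pred W) (F : W -> R) :
  \sum_(w | Q w) F w = \sum_u \sum_(v | Q (join u v)) F (join u v).
Proof.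
rewrite big_mkcond sum_split; apply: eq_bigr => u _; by rewrite [RHS]big_mkcond.
Qed.

Lemma margAE P u : marg fa P u = \sum_v P (join u v).
Proof.
rewrite /marg sum_splitP (bigD1 u) //= [X in _ + X]big1 ?addr0.
  by apply: eq_bigl => v; rewrite faK eqxx.
move=> u' nu; move/negbTE: nu => nu; rewrite big_pred0 // => v; by rewrite faK nu.
Qed.

Lemma margBE P v : marg fb P v = \sum_u P (join u v).
Proof.
rewrite /marg big_mkcond sum_split exchange_big (bigD1 v) //= [X in _ + X]big1 ?addr0.
  by apply: eq_bigr => u _; rewrite fbK eqxx.
move=> v' nv; apply: big1 => u _; by rewrite fbK (negbTE nv).
Qed.

Lemma sum_margA P : \sum_u marg fa P u = \sum_w P w.
Proof. by rewrite sum_split; apply: eq_bigr => u _; rewrite margAE. Qed.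

Lemma sum_margB P : \sum_v marg fb P v = \sum_w P w.
Proof.
rewrite sum_split exchange_big; apply: eq_bigr => v _; by rewrite margBE.
Qed.

Lemma sum_faP (g : pred U) P :
  \sum_(w | g (fa w)) P w = \sum_(u | g u) marg fa P u.
Proof.
rewrite sum_splitP [RHS]big_mkcond; apply: eq_bigr => u _.
rewrite margAE; under eq_bigl => v do rewrite faK.
by case: (g u) => //; rewrite big_pred0_eq.
Qed.

Lemma sum_fbP (g : pred V) P :
  \sum_(w | g (fb w)) P w = \sum_(v | g v) marg fb P v.
Proof.
rewrite big_mkcond sum_split exchange_big [RHS]big_mkcond; apply: eq_bigr => v _.
rewrite margBE; under eq_bigr => u _ do rewrite fbK.
by case: (g v) => //; rewrite big1_eq.
Qed.

Lemma sum_faG P (G : U -> R) :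
  \sum_w P w * G (fa w) = \sum_u marg fa P u * G u.
Proof.
rewrite sum_split; apply: eq_bigr => u _; rewrite margAE mulr_suml.
by apply: eq_bigr => v _; rewrite faK.
Qed.

Lemma sum_fbG P (G : V -> R) :
  \sum_w P w * G (fb w) = \sum_v marg fb P v * G v.
Proof.
rewrite sum_split exchange_big; apply: eq_bigr => v _; rewrite margBE mulr_suml.
by apply: eq_bigr => u _; rewrite fbK.
Qed.

Lemma margA_prod PA PB : \sum_v PB v = 1 -> marg fa (prodD PA PB) =1 PA.
Proof.
move=> s1 u; rewrite margAE /prodD.
under eq_bigr => v _ do rewrite faK fbK.
by rewrite -mulr_sumr s1 mulr1.
Qed.

Lemma margB_prod PA PB : \sum_u PA u = 1 -> marg fb (prodD PA PB) =1 PB.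
Proof.
move=> s1 v; rewrite margBE /prodD.
under eq_bigr => u _ do rewrite faK fbK.
by rewrite -mulr_suml s1 mul1r.
Qed.

Lemma distr_prod PA PB : distr PA -> distr PB -> distr (prodD PA PB).
Proof.
move=> [a0 a1] [b0 b1]; split; first by move=> w; rewrite /prodD mulr_ge0.
rewrite sum_split /prodD.
under eq_bigr => u _ do under eq_bigr => v _ do rewrite faK fbK.
under eq_bigr => u _ do rewrite -mulr_sumr b1 mulr1.
by [].
Qed.

Lemma distr_margA P : distr P -> distr (marg fa P).
Proof.
move=> [p0 p1]; split; last by rewrite sum_margA.
by move=> u; rewrite /marg sumr_ge0.
Qed.

Lemma distr_margB P : distr P -> distr (marg fb P).
Proof.
move=> [p0 p1]; split; last by rewrite sum_margB.
by move=> u; rewrite /marg sumr_ge0.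
Qed.

Lemma H_prod PA PB : distr PA -> distr PB ->
  Hf (prodD PA PB) = Hf PA + Hf PB.
Proof.
move=> [a0 a1] [b0 b1]; rewrite /Hf -opprD; congr (- _).
rewrite sum_split /prodD.
have e : forall u v, PA u * PB v * ln (PA u * PB v) =
    PB v * (PA u * ln (PA u)) + PA u * (PB v * ln (PB v)).
  move=> u v; have [->|ua] := eqVneq (PA u) 0; first by rewrite !(mulr0, mul0r, addr0, add0r).
  have [->|vb] := eqVneq (PB v) 0; first by rewrite !(mulr0, mul0r, addr0, add0r).
  have pu : 0 < PA u by rewrite lt_def ua a0.
  have pv : 0 < PB v by rewrite lt_def vb b0.
  rewrite lnM ?posrE //; ring.
under eq_bigr => u _ do under eq_bigr => v _ do rewrite faK fbK e.
under eq_bigr => u _ do rewrite big_split /= -mulr_suml b1 mul1r -mulr_sumr.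
rewrite big_split /= -mulr_suml a1 mul1r; by [].
Qed.

Lemma margA_ge P w : (forall x, 0 <= P x) -> P w <= marg fa P (fa w).
Proof.
move=> p0; rewrite margAE (bigD1 (fb w)) //= joinK lerDl sumr_ge0 //.
Qed.

Lemma margB_ge P w : (forall x, 0 <= P x) -> P w <= marg fb P (fb w).
Proof.
move=> p0; rewrite margBE (bigD1 (fa w)) //= joinK lerDl sumr_ge0 //.
Qed.

Lemma H_sub P : distr P -> Hf P <= Hf (marg fa P) + Hf (marg fb P).
Proof.
move=> [p0 p1].
set PA := marg fa P; set PB := marg fb P.
have a0 : forall u, 0 <= PA u by move=> u; rewrite /PA/marg sumr_ge0.
have b0 : forall v, 0 <= PB v by move=> v; rewrite /PB/marg sumr_ge0.
have eA : \sum_u PA u * ln (PA u) = \sum_w P w * ln (PA (fa w)) by rewrite (sum_faG P (fun u => ln (PA u))).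
have eB : \sum_v PB v * ln (PB v) = \sum_w P w * ln (PB (fb w)) by rewrite (sum_fbG P (fun v => ln (PB v))).
have sAB : \sum_w PA (fa w) * PB (fb w) = 1.
  have := distr_prod (distr_margA (conj p0 p1)) (distr_margB (conj p0 p1)).
  by case.
have term : forall w, P w * (ln (PA (fa w)) + ln (PB (fb w)) - ln (P w)) <=
    PA (fa w) * PB (fb w) - P w.
  move=> w; have [->|pw] := eqVneq (P w) 0.
    by rewrite mul0r subr0 mulr_ge0.
  have pp : 0 < P w by rewrite lt_def pw p0.
  have pa : 0 < PA (fa w) by apply: lt_le_trans pp (margA_ge _ p0).
  have pb : 0 < PB (fb w) by apply: lt_le_trans pp (margB_ge _ p0).
  have -> : ln (PA (fa w)) + ln (PB (fb w)) - ln (P w) =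
      ln (PA (fa w) * PB (fb w) / P w).
    by rewrite ln_div ?posrE ?mulr_gt0 // lnM ?posrE.
  have -> : PA (fa w) * PB (fb w) - P w = P w * (PA (fa w) * PB (fb w) / P w - 1).
    by field; rewrite lt0r_neq0.
  by rewrite ler_pM2l // ln_le_sub1 // divr_gt0 ?mulr_gt0.
have := ler_sum (index_enum W) (P := predT) (fun w _ => term w).
rewrite sumrB sAB p1 subrr => h.
rewrite /Hf eA eB.
have : \sum_w P w * ln (P w) - \sum_w P w * ln (PA (fa w)) -
   \sum_w P w * ln (PB (fb w)) >= 0.
  rewrite -oppr_le0; apply: (le_trans _ h).
  rewrite le_eqVlt; apply/orP; left; apply/eqP.
  rewrite !opprB -sumrB -big_split /=; apply: eq_bigr => w _; ring.
move=> hh; rewrite -opprD lerN2 -subr_ge0 opprD addrA; exact: hh.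
Qed.

Section ME.
Variables (MW : (W -> R) -> Prop) (MU : (U -> R) -> Prop) (MV : (V -> R) -> Prop).
Hypotheses (h1 : forall P, MW P -> [/\ distr P, MU (marg fa P) & MV (marg fb P)])
  (h2 : forall QA QB, MU QA -> MV QB -> MW (prodD QA QB))
  (hU : forall Q, MU Q -> distr Q) (hV : forall Q, MV Q -> distr Q).

Lemma ME_marg P : MW P -> (forall Q, MW Q -> Hf Q <= Hf P) ->
  MU (marg fa P) /\ forall Q, MU Q -> Hf Q <= Hf (marg fa P).
Proof.
move=> mP maxP; have [dP mA mB] := h1 mP; split => // Q mQ.
have := maxP _ (h2 mQ mB); rewrite H_prod; [move=> h|exact: hU|exact: hV].
have := H_sub dP; lra.
Qed.
End ME.

End Split.

Lemma ME_unique (T : finType) (M : (T -> R) -> Prop) :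
  (forall P Q, M P -> M Q -> M (fun x => (P x + Q x) / 2)) ->
  (forall P, M P -> distr P) ->
  forall P Q, M P -> (forall Q', M Q' -> Hf Q' <= Hf P) ->
  M Q -> (forall Q', M Q' -> Hf Q' <= Hf Q) -> P =1 Q.
Proof.
move=> cvx dM P Q mP maxP mQ maxQ.
have [p0 _] := dM _ mP; have [q0 _] := dM _ mQ.
set Mi := fun x => (P x + Q x) / 2.
have hm1 := maxP _ (cvx _ _ mP mQ); have hPQ := maxP _ mQ; have hQP := maxQ _ mP.
have S0 : \sum_x (P x * ln (P x) + Q x * ln (Q x) - 2 * (Mi x * ln (Mi x))) = 0.
  apply/eqP; rewrite eq_le; apply/andP; split; last first.
    by apply: sumr_ge0 => x _; have [] := xlnx_mid (p0 x) (q0 x).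
  rewrite !sumrB -mulr_sumr.
  rewrite big_split /=; move: hm1 hPQ hQP; rewrite /Hf /Mi; lra.
have nn : forall x, predT x ->
    0 <= P x * ln (P x) + Q x * ln (Q x) - 2 * (Mi x * ln (Mi x)).
  by move=> x' _; have [] := xlnx_mid (p0 x') (q0 x').
move=> x; have := psumr_eq0P nn S0 (i:=x) isT.
by have [_] := xlnx_mid (p0 x) (q0 x); apply.
Qed.


Lemma sum_margP (T T' : finType) (f : T -> T') (g : pred T') (P : T -> R) :
  \sum_(w | g (f w)) P w = \sum_(u | g u) marg f P u.
Proof.
rewrite (partition_big f g) //; apply: eq_bigr => u gu; apply: eq_bigl => w.
by case: eqP => [->|]; rewrite ?gu ?andbF.
Qed.

Lemma sum_marg (T T' : finType) (f : T -> T') (P : T -> R) :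
  \sum_u marg f P u = \sum_w P w.
Proof. by rewrite -(sum_margP f predT). Qed.

Lemma distr_marg (T T' : finType) (f : T -> T') (P : T -> R) :
  distr P -> distr (marg f P).
Proof.
move=> [p0 p1]; split; last by rewrite sum_marg.
by move=> u; rewrite /marg sumr_ge0.
Qed.

Definition restr (S T : {fset nat}) (v : assignment S) : assignment T :=
  [ffun t : T => eval_var v (val t)].

Lemma eval_val (S : {fset nat}) (v : assignment S) (s : S) : eval_var v (val s) = v s.
Proof. by rewrite /eval_var valK. Qed.

Lemma eval_restr (S T : {fset nat}) (v : assignment S) x :
  x \in T -> eval_var (restr T v) x = eval_var v x.
Proof.
move=> xT; rewrite {1}/eval_var; case: insubP => [t _ <-|]; last by rewrite xT.
by rewrite ffunE.
Qed.

Lemma sat_restr (S T : {fset nat}) (v : assignment S) f :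
  all (fun x => x \in T) (pvars f) -> sat (restr T v) f = sat v f.
Proof.
elim: f => //= [x|g IH|g IHg h IHh|g IHg h IHh].
- by rewrite andbT => /eval_restr ->.
- by move/IH ->.
- by rewrite all_cat => /andP[/IHg -> /IHh ->].
- by rewrite all_cat => /andP[/IHg -> /IHh ->].
Qed.

Definition joinA (S A : {fset nat}) (u : assignment A) (v : assignment (S `\` A)%fset)
  : assignment S :=
  [ffun s : S => if val s \in A then eval_var u (val s) else eval_var v (val s)].

Section JoinS.
Variables (S A : {fset nat}).
Hypothesis (AS : {subset A <= S}).

Lemma joinA_faK u v : restr A (@joinA S A u v) = u.
Proof.
apply/ffunP => a; rewrite ffunE.
have aS : val a \in S by apply: AS; exact: valP.
rewrite /eval_var; case: insubP => [s _ sa|]; last by rewrite aS.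
by rewrite ffunE sa (valP a) eval_val.
Qed.

Lemma joinA_fbK u v : restr (S `\` A)%fset (@joinA S A u v) = v.
Proof.
apply/ffunP => b; rewrite ffunE.
have := valP b; rewrite !inE => /andP[bA bS].
rewrite /eval_var; case: insubP => [s _ sb|]; last by rewrite bS.
by rewrite ffunE sb (negbTE bA) eval_val.
Qed.

Lemma joinA_K w : @joinA S A (restr A w) (restr (S `\` A)%fset w) = w.
Proof.
apply/ffunP => s; rewrite ffunE; case: ifP => sA.
  by rewrite eval_restr // eval_val.
by rewrite eval_restr ?eval_val // !inE sA (valP s).
Qed.
End JoinS.

Lemma prob_ext (S : {fset nat}) (P Q : assignment S -> R) f :
  P =1 Q -> prob P f = prob Q f.
Proof. by move=> e; apply: eq_bigr => v _; rewrite e. Qed.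

Lemma pc_sat_ext (S : {fset nat}) (P Q : assignment S -> R) c :
  P =1 Q -> pc_sat P c <-> pc_sat Q c.
Proof.
move=> e; rewrite /pc_sat.
by rewrite (eq_bigr (fun t => t.1 * prob Q t.2)) // => t _; rewrite (prob_ext _ e).
Qed.

Lemma prob_marg (S T : {fset nat}) (P : assignment S -> R) f :
  all (fun x => x \in T) (pvars f) -> prob P f = prob (marg (@restr S T) P) f.
Proof.
move=> hf; rewrite /prob -(sum_margP (@restr S T) (fun u => sat u f)).
by apply: eq_bigl => v; rewrite sat_restr.
Qed.

Lemma pc_sat_marg (S T : {fset nat}) (P : assignment S -> R) c :
  all (fun x => x \in T) (pc_vars c) ->
  pc_sat P c <-> pc_sat (marg (@restr S T) P) c.
Proof.
rewrite /pc_sat /pc_vars; case: c => c0 ts /=.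
have key : all (fun x => x \in T) (flatten [seq pvars t.2 | t <- ts]) ->
  \sum_(t <- ts) t.1 * prob P t.2 = \sum_(t <- ts) t.1 * prob (marg (@restr S T) P) t.2.
  elim: ts => [|t ts IH]; first by rewrite !big_nil.
  rewrite /= all_cat => /andP[h1 h2]; rewrite !big_cons IH // (prob_marg _ (T := T)) //.
by move=> hc; rewrite (key hc).
Qed.

Definition ModRT (Rs : seq (pconstraint R)) (T : {fset nat}) :=
  forall c, List.In c Rs -> all (fun x => x \in T) (pc_vars c).

Lemma ModR_marg (S T : {fset nat}) (Rs : seq (pconstraint R)) (P : assignment S -> R) :
  ModRT Rs T -> ModR Rs P -> ModR Rs (marg (@restr S T) P).
Proof.
move=> hT [dP hP]; split; first exact: (distr_marg _ dP).
by move=> c cin; rewrite -pc_sat_marg; [exact: hP|exact: hT].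
Qed.

Lemma ME_margA (S A : {fset nat}) (AS : {subset A <= S})
  (Rs1 Rs2 : seq (pconstraint R)) (P : assignment S -> R) :
  ModRT Rs1 A -> ModRT Rs2 (S `\` A)%fset ->
  is_ME (Rs1 ++ Rs2) P -> is_ME Rs1 (marg (@restr S A) P).
Proof.
move=> h1 h2 [mP maxP].
have faK := joinA_faK AS; have fbK := @joinA_fbK S A; have jK := @joinA_K S A.
have H1 : forall Q, ModR (Rs1 ++ Rs2) Q ->
    [/\ distr Q, ModR Rs1 (marg (@restr S A) Q) & ModR Rs2 (marg (@restr S (S `\` A)%fset) Q)].
  move=> Q mQ; split; first by case: mQ.
  + apply: ModR_marg h1 _; case: mQ => dQ hQ; split => // c cin.
    by apply: hQ; apply: List.in_or_app; left.
  + apply: ModR_marg h2 _; case: mQ => dQ hQ; split => // c cin.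
    by apply: hQ; apply: List.in_or_app; right.
have H2 : forall QA QB, ModR Rs1 QA -> ModR Rs2 QB ->
    ModR (Rs1 ++ Rs2) (prodD (@restr S A) (@restr S (S `\` A)%fset) QA QB).
  move=> QA QB [dA hA] [dB hB]; split; first exact: distr_prod.
  move=> c cin0; case: (List.in_app_or _ _ _ cin0) => cin.
    rewrite (pc_sat_marg (T := A)); last exact: h1.
    rewrite (pc_sat_ext _ (margA_prod faK fbK jK _ (proj2 dB))); exact: hA.
  rewrite (pc_sat_marg (T := (S `\` A)%fset)); last exact: h2.
  rewrite (pc_sat_ext _ (margB_prod faK fbK jK _ (proj2 dA))); exact: hB.
have [] := ME_marg faK fbK jK H1 H2 _ _ mP maxP.
- by move=> Q [].
- by move=> Q [].
- by move=> mA maxA; split.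
Qed.

Lemma ModR_convex (T : {fset nat}) (Rs : seq (pconstraint R)) (P Q : assignment T -> R) :
  ModR Rs P -> ModR Rs Q -> ModR Rs (fun x => (P x + Q x) / 2).
Proof.
move=> [[p0 p1] hP] [[q0 q1] hQ]; split.
  split; first by move=> x; rewrite divr_ge0 ?addr_ge0.
  by rewrite -mulr_suml big_split /= p1 q1; field.
have pm : forall f, prob (fun x => (P x + Q x) / 2) f = (prob P f + prob Q f) / 2.
  by move=> f; rewrite /prob -mulr_suml big_split.
move=> c cin; have := hP c cin; have := hQ c cin; rewrite /pc_sat => hq hp.
rewrite (eq_bigr (fun t => t.1 * ((prob P t.2 + prob Q t.2) / 2))); last first.
  by move=> t _; rewrite pm.
have -> : \sum_(t <- pc_terms c) t.1 * ((prob P t.2 + prob Q t.2) / 2) =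
   (\sum_(t <- pc_terms c) t.1 * prob P t.2 + \sum_(t <- pc_terms c) t.1 * prob Q t.2) / 2.
  rewrite -big_split /= mulr_suml; apply: eq_bigr => t _; ring.
lra.
Qed.

Lemma ME_eq (T : {fset nat}) (Rs : seq (pconstraint R)) (P Q : assignment T -> R) :
  is_ME Rs P -> is_ME Rs Q -> P =1 Q.
Proof.
move=> [mP maxP] [mQ maxQ].
apply: (@ME_unique _ (ModR Rs)) => //.
- by move=> P' Q'; apply: ModR_convex.
- by move=> P' [].
Qed.


Lemma margI (S A : {fset nat}) (P : alcp_interp R S) u :
  marg (@restr S A) (marginal P) u =
  \sum_(i : ai_idx P | restr A (w_val (ai_world i)) == u) ai_prob i.
Proof.
by rewrite (sum_margP (fun i : ai_idx P => w_val (ai_world i)) (fun v => restr A v == u)).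
Qed.

Lemma margI_ge (S A : {fset nat}) (P : alcp_interp R S) (i : ai_idx P) :
  ai_prob i <= marg (@restr S A) (marginal P) (restr A (w_val (ai_world i))).
Proof.
rewrite margI (bigD1 i) //= lerDl sumr_ge0 // => k _; exact: ai_prob_ge0.
Qed.

Lemma margI_ge0 (S A : {fset nat}) (P : alcp_interp R S) u :
  0 <= marg (@restr S A) (marginal P) u.
Proof. rewrite margI sumr_ge0 // => k _; exact: ai_prob_ge0. Qed.

Section Mix.
Variables (S S' A : {fset nat}) (P : alcp_interp R S) (Q : alcp_interp R S').
Let uP (i : ai_idx P) := restr A (w_val (ai_world i)).
Let wQ (j : ai_idx Q) := restr A (w_val (ai_world j)).
Let mP := marg (@restr S A) (marginal P).
Hypothesis hm : forall u, mP u = marg (@restr S' A) (marginal Q) u.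

Definition wt (k : ai_idx P * ai_idx Q) : R :=
  if uP k.1 == wQ k.2 then ai_prob k.1 * ai_prob k.2 / mP (uP k.1) else 0.

Lemma wt_ge0 k : 0 <= wt k.
Proof.
rewrite /wt; case: ifP => // _.
by rewrite divr_ge0 ?mulr_ge0 ?ai_prob_ge0 // /mP margI_ge0.
Qed.

Lemma mixL (F : pred (ai_idx P)) :
  \sum_(k | F k.1) wt k = \sum_(i | F i) ai_prob i.
Proof.
have -> : \sum_(k | F k.1) wt k = \sum_(i | F i) \sum_j wt (i, j).
  by rewrite [RHS]pair_big /=; apply: eq_big => [[i j]|[i j]] //=; rewrite andbT.
apply: eq_bigr => i _.
rewrite -big_mkcond /=.
have -> : \sum_(j | uP i == wQ j) ai_prob i * ai_prob j / mP (uP i) =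
    ai_prob i / mP (uP i) * \sum_(j | uP i == wQ j) ai_prob j.
  rewrite mulr_sumr; apply: eq_bigr => j _; rewrite mulrAC mulrC mulrA //.
have -> : \sum_(j | uP i == wQ j) ai_prob j = mP (uP i).
  rewrite hm margI; apply: eq_bigl => j; by rewrite eq_sym.
have [m0|m0] := eqVneq (mP (uP i)) 0.
  have : ai_prob i <= 0 by rewrite -m0 /mP /uP margI_ge.
  move=> h; have -> : ai_prob i = 0 by apply/le_anti; rewrite h ai_prob_ge0.
  by rewrite !mul0r.
by rewrite divfK.
Qed.

Lemma mixR (G : pred (ai_idx Q)) :
  \sum_(k | G k.2) wt k = \sum_(j | G j) ai_prob j.
Proof.
have -> : \sum_(k | G k.2) wt k = \sum_(j | G j) \sum_i wt (i, j).
  by rewrite [RHS]exchange_big [RHS]pair_big /=; apply: eq_big => [[i j]|[i j]] //=.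
apply: eq_bigr => j _.
rewrite -big_mkcond /=.
have e : forall i : ai_idx P, uP i == wQ j -> mP (uP i) = mP (wQ j).
  by move=> i /eqP ->.
rewrite (eq_bigr (fun i => ai_prob j / mP (wQ j) * ai_prob i)); last first.
  by move=> i /e ->; ring.
rewrite -mulr_sumr.
have -> : \sum_(i | uP i == wQ j) ai_prob i = mP (wQ j) by rewrite /mP margI.
have [m0|m0] := eqVneq (mP (wQ j)) 0.
  have : ai_prob j <= 0.
    by rewrite -m0 hm /wQ margI_ge.
  move=> h; have -> : ai_prob j = 0 by apply/le_anti; rewrite h ai_prob_ge0.
  by rewrite !mul0r.
by rewrite divfK.
Qed.

Lemma wt_sum1 : \sum_k wt k = 1.
Proof. by rewrite (mixR predT) ai_prob_sum1. Qed.

Definition mixI (cw : ai_idx P -> ai_idx Q -> world S') : alcp_interp R S' :=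
  @ALCPInterp R S' (ai_idx P * ai_idx Q)%type (fun k => cw k.1 k.2) wt
    wt_ge0 wt_sum1.

Variables (cw : ai_idx P -> ai_idx Q -> world S') (C D : concept) (kappa : pform).
Hypotheses (hk : all (fun x => x \in A) (pvars kappa))
  (hval : forall i j, w_val (cw i j) = w_val (ai_world j))
  (hsub : forall i j, uP i = wQ j -> (subsumed (cw i j) C D <-> subsumed (ai_world i) C D)).

Lemma sat_agree (T1 T2 : {fset nat}) (v1 : assignment T1) (v2 : assignment T2) f :
  all (fun x => x \in A) (pvars f) -> restr A v1 = restr A v2 -> sat v1 f = sat v2 f.
Proof. by move=> hf e; rewrite -(sat_restr v1 hf) -(sat_restr v2 hf) e. Qed.

Lemma mix_marginal : marginal (mixI cw) = marginal Q.
Proof.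
apply: funext => v; rewrite /marginal /=.
rewrite (eq_bigl (fun k => w_val (ai_world k.2) == v)); last by move=> k /=; rewrite hval.
exact: (mixR (fun j => w_val (ai_world j) == v)).
Qed.

Lemma mix_cond : cond_prob (mixI cw) C D kappa = cond_prob P C D kappa.
Proof.
rewrite /cond_prob /=; congr (_ / _).
  have := mixL (fun i => sat (w_val (ai_world i)) kappa &&
             `[< subsumed (ai_world i) C D >]); rewrite /= => <-.
  rewrite big_mkcond [RHS]big_mkcond; apply: eq_bigr => k _ /=.
  rewrite /wt; case: eqP => [e|_]; last by case: ifP; case: ifP.
  rewrite hval -(sat_agree hk e).
  by rewrite (propext (hsub e)).
have := mixL (fun i => sat (w_val (ai_world i)) kappa); rewrite /= => <-.
rewrite big_mkcond [RHS]big_mkcond; apply: eq_bigr => k _ /=.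
rewrite /wt; case: eqP => [e|_]; last by case: ifP; case: ifP.
by rewrite hval -(sat_agree hk e).
Qed.

End Mix.

End Ent.

Definition pw (S S' : {fset nat}) (I1 : world S) (I2 : world S') (cs rs : pred nat)
  : world S' :=
  @World S' (w_dom I1 * w_dom I2)%type (w_elt I1, w_elt I2)
    (fun a x => if cs a then @w_cext _ I2 a x.2 else @w_cext _ I1 a x.1)
    (fun r x y => if rs r then @w_rext _ I2 r x.2 y.2 /\ x.1 = y.1
                  else @w_rext _ I1 r x.1 y.1 /\ x.2 = y.2)
    (w_val I2).

Section PW.
Variables (S S' : {fset nat}) (I1 : world S) (I2 : world S') (cs rs : pred nat).

Lemma cext_pw1 E : all (fun a => ~~ cs a) (cnames E) -> all (fun r => ~~ rs r) (rnames E) ->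
  forall x, @cext _ (pw I1 I2 cs rs) E x <-> @cext _ I1 E x.1.
Proof.
elim: E => [a|E IH|E1 IH1 E2 IH2|r E IH] /=.
- by rewrite andbT => /negbTE -> _ x.
- move=> h1 h2 x; have := IH h1 h2 x; tauto.
- rewrite !all_cat => /andP[a1 a2] /andP[b1 b2] x.
  have := IH1 a1 b1 x; have := IH2 a2 b2 x; tauto.
- move=> h1 /andP[/negbTE rr h2] x; rewrite rr; split.
    by case=> y [[ry _] cy]; exists y.1; split => //; apply/(IH h1 h2).
  case=> y1 [ry cy]; exists (y1, x.2); split => //; apply/(IH h1 h2); exact: cy.
Qed.

Lemma cext_pw2 E : all cs (cnames E) -> all rs (rnames E) ->
  forall x, @cext _ (pw I1 I2 cs rs) E x <-> @cext _ I2 E x.2.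
Proof.
elim: E => [a|E IH|E1 IH1 E2 IH2|r E IH] /=.
- by rewrite andbT => -> _ x.
- move=> h1 h2 x; have := IH h1 h2 x; tauto.
- rewrite !all_cat => /andP[a1 a2] /andP[b1 b2] x.
  have := IH1 a1 b1 x; have := IH2 a2 b2 x; tauto.
- move=> h1 /andP[rr h2] x; rewrite rr; split.
    by case=> y [[ry _] cy]; exists y.2; split => //; apply/(IH h1 h2).
  case=> y2 [ry cy]; exists (x.1, y2); split => //; apply/(IH h1 h2); exact: cy.
Qed.

Lemma sub_pw1 E F :
  all (fun a => ~~ cs a) (cnames E ++ cnames F) -> all (fun r => ~~ rs r) (rnames E ++ rnames F) ->
  subsumed (pw I1 I2 cs rs) E F <-> subsumed I1 E F.
Proof.
rewrite !all_cat => /andP[a1 a2] /andP[b1 b2]; split.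
  move=> h x cx; have := h (x, w_elt I2).
  by rewrite (cext_pw1 a1 b1) (cext_pw1 a2 b2); apply.
move=> h x; rewrite (cext_pw1 a1 b1) (cext_pw1 a2 b2); exact: h.
Qed.

Lemma sub_pw2 E F :
  all cs (cnames E ++ cnames F) -> all rs (rnames E ++ rnames F) ->
  subsumed I2 E F -> subsumed (pw I1 I2 cs rs) E F.
Proof.
rewrite !all_cat => /andP[a1 a2] /andP[b1 b2] h x.
rewrite (cext_pw2 a1 b1) (cext_pw2 a2 b2); exact: h.
Qed.
End PW.

Definition reval (S S' : {fset nat}) (I : world S) (v : assignment S') : world S' :=
  @World S' (w_dom I) (w_elt I) (@w_cext _ I) (@w_rext _ I) v.

Lemma cext_reval (S S' : {fset nat}) (I : world S) (v : assignment S') E x :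
  @cext _ (reval I v) E x <-> @cext _ I E x.
Proof.
elim: E x => [a|E IH|E1 IH1 E2 IH2|r E IH] x /=.
- by [].
- have := IH x; tauto.
- have := IH1 x; have := IH2 x; tauto.
- split; case=> y [ry cy]; exists y; split => //; apply/IH => //.
Qed.

Lemma sub_reval (S S' : {fset nat}) (I : world S) (v : assignment S') E F :
  subsumed (reval I v) E F <-> subsumed I E F.
Proof.
split=> h x; have := @cext_reval _ _ I v E x; have := @cext_reval _ _ I v F x; have := h x; tauto.
Qed.

Lemma in_flat (X : Type) (f : X -> seq nat) (s : seq X) x y :
  List.In x s -> y \in f x -> y \in flatten (map f s).
Proof.
elim: s => [//|z s IH] /= [->|xs] yf; rewrite mem_cat ?yf //.
by rewrite IH ?orbT.
Qed.


Theorem theorem8 (R : realType) (K1 K2 : kb R) (C D : concept) (kappa : pform) :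
  kb_wf K1 -> kb_wf K2 ->
  sig_disjoint K1 K2 ->
  ME_consistent K1 ->
  ME_consistent (kb_union K1 K2) ->
  in_lang (kb_lang K1) kappa ->
  (forall x, x \in pvars kappa -> x \notin sig_vars K2) ->
  (forall A, A \in cnames C ++ cnames D -> A \notin sig_cnames K2) ->
  (forall r, r \in rnames C ++ rnames D -> r \notin sig_rnames K2) ->
  belief_interval K1 C D kappa = belief_interval (kb_union K1 K2) C D kappa.
Proof.
move=> [wf1R wf1T] [wf2R wf2T] [dv dc dr] [X0 hX0] [Y0 hY0] hk hk2 hC hR.
pose A : {fset nat} := [fset x in kb_lang K1 | x \notin sig_vars K2]%fset.
have inA : forall x, (x \in A) = (x \in kb_lang K1) && (x \notin sig_vars K2).
  by move=> x; rewrite !inE.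
have AS1 : {subset A <= kb_lang K1} by move=> x; rewrite inA => /andP[].
have AS12 : {subset A <= kb_lang (kb_union K1 K2)}.
  by move=> x /AS1 h; rewrite /= inE h.
have f1 : ModRT (kb_R K1) A.
  move=> c cin; apply/allP => x xc; rewrite inA (allP (wf1R c cin) x xc) /=.
  apply: dv; rewrite /sig_vars mem_cat; apply/orP; left.
  exact: (in_flat (f := @pc_vars R) cin xc).
have f2 : ModRT (kb_R K2) (kb_lang (kb_union K1 K2) `\` A)%fset.
  move=> c cin; apply/allP => x xc.
  have xs : x \in sig_vars K2.
    rewrite /sig_vars mem_cat; apply/orP; left.
    exact: (in_flat (f := @pc_vars R) cin xc).
  rewrite !inE (allP (wf2R c cin) x xc) orbT andbT.
  by rewrite xs andbF.
have f3 : ModRT (R := R) [::] (kb_lang K1 `\` A)%fset by move=> c [].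
have fT1 : forall g, List.In g (kb_T K1) -> all (fun x => x \in A) (pvars (g_ctx g)).
  move=> g gin; apply/allP => x xc; rewrite inA (allP (wf1T g gin) x xc) /=.
  apply: dv; rewrite /sig_vars mem_cat; apply/orP; right.
  exact: (in_flat (f := fun g => pvars (g_ctx g)) gin xc).
have fk : all (fun x => x \in A) (pvars kappa).
  by apply/allP => x xk; rewrite inA (allP hk x xk) hk2.
have hME : forall (X : alcp_interp R (kb_lang K1))
    (Y : alcp_interp R (kb_lang (kb_union K1 K2))),
    is_ME_model X -> is_ME_model Y ->
    forall u, marg (@restr _ A) (marginal X) u = marg (@restr _ A) (marginal Y) u.
  move=> X Y [_ mX] [_ mY].
  have e1 : is_ME (kb_R K1 ++ [::]) (marginal X) by rewrite cats0.
  exact: (ME_eq (ME_margA AS1 f1 f3 e1) (ME_margA AS12 f1 f2 mY)).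
pose cs := fun a => a \in sig_cnames K2.
pose rs := fun r => r \in sig_rnames K2.
have cT1 : forall g, List.In g (kb_T K1) ->
    all (fun a => ~~ cs a) (cnames (g_lhs g) ++ cnames (g_rhs g)).
  move=> g gin; apply/allP => a ain; apply: dc.
  exact: (in_flat (f := fun g => cnames (g_lhs g) ++ cnames (g_rhs g)) gin ain).
have rT1 : forall g, List.In g (kb_T K1) ->
    all (fun a => ~~ rs a) (rnames (g_lhs g) ++ rnames (g_rhs g)).
  move=> g gin; apply/allP => a ain; apply: dr.
  exact: (in_flat (f := fun g => rnames (g_lhs g) ++ rnames (g_rhs g)) gin ain).
have cT2 : forall g, List.In g (kb_T K2) ->
    all cs (cnames (g_lhs g) ++ cnames (g_rhs g)).
  move=> g gin; apply/allP => a ain.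
  exact: (in_flat (f := fun g => cnames (g_lhs g) ++ cnames (g_rhs g)) gin ain).
have rT2 : forall g, List.In g (kb_T K2) ->
    all rs (rnames (g_lhs g) ++ rnames (g_rhs g)).
  move=> g gin; apply/allP => a ain.
  exact: (in_flat (f := fun g => rnames (g_lhs g) ++ rnames (g_rhs g)) gin ain).
have hCD : all (fun a => ~~ cs a) (cnames C ++ cnames D) by apply/allP => a /hC.
have hRD : all (fun a => ~~ rs a) (rnames C ++ rnames D) by apply/allP => a /hR.
suff E : belief_values K1 C D kappa = belief_values (kb_union K1 K2) C D kappa.
  by rewrite /belief_interval E.
rewrite /belief_values; apply/seteqP; split => x /= [Z [mZ <-]].
- have hm := hME Z Y0 mZ hY0.
  pose cw := fun (i : ai_idx Z) (j : ai_idx Y0) =>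
    if restr A (w_val (ai_world i)) == restr A (w_val (ai_world j))
    then pw (ai_world i) (ai_world j) cs rs else ai_world j.
  have hval : forall i j, w_val (cw i j) = w_val (ai_world j).
    by move=> i j; rewrite /cw; case: eqP.
  exists (mixI hm cw); split; last first.
    apply: mix_cond fk hval _ => i j /= e.
    by rewrite /cw e eqxx; apply: sub_pw1.
  split; last by rewrite mix_marginal //; case: hY0.
  move=> [i j] g gin /=; rewrite /cw; case: eqP => [e|_]; last first.
    by case: hY0 => hw _; apply: hw.
  case: (List.in_app_or _ _ _ gin) => gT.
  + case: mZ => hw _; case: (hw i g gT) => [ns|sb].
      by left; rewrite /= -(sat_agree (fT1 g gT) e).
    by right; apply/(sub_pw1 _ _ (cT1 g gT) (rT1 g gT)).
  + case: hY0 => hw _; case: (hw j g (List.in_or_app _ _ _ (or_intror gT))) => [ns|sb].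
      by left.
    by right; apply: sub_pw2 (cT2 g gT) (rT2 g gT) sb.
- have hm : forall u, marg (@restr _ A) (marginal Z) u = marg (@restr _ A) (marginal X0) u.
    by move=> u; rewrite (hME X0 Z hX0 mZ).
  pose cw := fun (i : ai_idx Z) (j : ai_idx X0) =>
    if restr A (w_val (ai_world i)) == restr A (w_val (ai_world j))
    then reval (ai_world i) (w_val (ai_world j)) else ai_world j.
  have hval : forall i j, w_val (cw i j) = w_val (ai_world j).
    by move=> i j; rewrite /cw; case: eqP.
  exists (mixI hm cw); split; last first.
    apply: mix_cond fk hval _ => i j /= e.
    by rewrite /cw e eqxx; apply: sub_reval.
  split; last by rewrite mix_marginal //; case: hX0.
  move=> [i j] g gin /=; rewrite /cw; case: eqP => [e|_]; last first.
    by case: hX0 => hw _; apply: hw.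
  case: mZ => hw _; case: (hw i g (List.in_or_app _ _ _ (or_introl gin))) => [ns|sb].
    by left; rewrite /= -(sat_agree (fT1 g gin) e).
  by right; apply/sub_reval.
Qed.
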